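(* Let $\mathscr{F}:\mathscr{C}_1\to\mathscr{C}_2$ be a functor that inverts coproducts, and suppose $\mathscr{C}_2$ is extensive. If $\mathcal{F}$ is an extensive presheaf on $\mathscr{C}_1$, then its right Kan extension $\mathscr{F}_*\mathcal{F}$ is an extensive presheaf on $\mathscr{C}_2$.
   Context: All categories are locally small. A functor $\mathscr{F}:\mathscr{C}_1\to\mathscr{C}_2$ inverts coproducts if it is fully faithful and, whenever $\mathscr{F}(X)=\coprod_{i\in I}Z_i$ (a coproduct in $\mathscr{C}_2$) for some object $X$ of $\mathscr{C}_1$, there exist objects $X_i$ of $\mathscr{C}_1$ and isomorphisms $\mathscr{F}(X_i)\to Z_i$. A category is extensive if it has an initial object $\emptyset$, existing binary coproducts are disjoint (the square formed by $\emptyset\to X$, $\emptyset\to Y$ and the coproduct injections into $X\sqcup Y$ is a pullback), and coproducts are stable under pullback: for any existing coproduct $\coprod_iU_i$ and any $f:X\to\coprod_iU_i$, the pullbacks $X\times_{\coprod U_i}U_i$ exist and $X$ is their coproduct via the projections to $X$ (existence of all coproducts is not required). A presheaf on $\mathscr{C}$ is a functor $\mathscr{C}^{op}\to\mathrm{Set}$, with $f^*:=\mathcal{F}(f)$; it is extensive if for every coproduct $X=\coprod_iX_i$ existing in $\mathscr{C}$ the canonical map $\mathcal{F}(X)\to\prod_i\mathcal{F}(X_i)$ induced by the coproduct injections is a bijection. For a presheaf $\mathcal{F}$ on $\mathscr{C}_1$ and an object $Y$ of $\mathscr{C}_2$, let $\mathscr{F}/Y$ be the category of pairs $(X,\psi)$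 with $X\in\mathscr{C}_1$ and $\psi:\mathscr{F}(X)\to Y$, a morphism $(X_1,\psi_1)\to(X_2,\psi_2)$ being $f:X_1\to X_2$ with $\psi_2\circ\mathscr{F}(f)=\psi_1$. Then $(\mathscr{F}_*\mathcal{F})(Y)$ is the set of families $(s_{X,\psi}\in\mathcal{F}(X))_{(X,\psi)\in\mathscr{F}/Y}$ with $f^*s_{X_2,\psi_2}=s_{X_1,\psi_1}$ for every morphism $f$ of $\mathscr{F}/Y$, and $g:Y_1\to Y_2$ acts by $(s_{X,\psi})\mapsto(s_{X,g\circ\phi})_{(X,\phi)\in\mathscr{F}/Y_1}$ (the right Kan extension). *)

(* Defs.v *)
From Stdlib Require Import FunctionalExtensionality ProofIrrelevance.
Set Implicit Arguments.
Unset Strict Implicit.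

Record Category := {
  Ob :> Type;
  Hom : Ob -> Ob -> Type;
  comp : forall a b c : Ob, Hom b c -> Hom a b -> Hom a c;
  idm : forall a : Ob, Hom a a;
  comp_assoc : forall a b c d (h : Hom c d) (g : Hom b c) (f : Hom a b),
      comp h (comp g f) = comp (comp h g) f;
  comp_id_l : forall a b (f : Hom a b), comp (idm b) f = f;
  comp_id_r : forall a b (f : Hom a b), comp f (idm a) = f
}.
Arguments comp {c a b c0} _ _ : rename.
Arguments idm {c} a : rename.
Arguments Hom {c} _ _ : rename.

Record Functor (C1 C2 : Category) := {
  Fob :> Ob C1 -> Ob C2;
  Fmap : forall a b : Ob C1, Hom a b -> Hom (Fob a) (Fob b);
  Fmap_id : forall a, Fmap (idm a) = idm (Fob a);
  Fmap_comp : forall a b c (g : Hom b c) (f : Hom a b),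
      Fmap (comp g f) = comp (Fmap g) (Fmap f)
}.
Arguments Fmap {C1 C2} f {a b} _ : rename.

Definition bijective {A B : Type} (f : A -> B) : Prop :=
  (forall x y, f x = f y -> x = y) /\ (forall y, exists x, f x = y).

Definition FullyFaithful {C1 C2 : Category} (F : Functor C1 C2) : Prop :=
  forall a b : Ob C1, bijective (fun f : Hom a b => Fmap F f).

Definition IsIso {C : Category} {a b : Ob C} (f : Hom a b) : Prop :=
  exists g : Hom b a, comp g f = idm a /\ comp f g = idm b.

Definition IsCoproduct {C : Category} (I : Type) (U : I -> Ob C) (S : Ob C)
  (inj : forall i, Hom (U i) S) : Prop :=
  forall (T : Ob C) (f : forall i, Hom (U i) T),
    exists h : Hom S T, (forall i, comp h (inj i) = f i) /\
      (forall h' : Hom S T, (forall i, comp h' (inj i) = f i) -> h' = h).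

Arguments IsCoproduct {C I} U S inj.

Definition IsBinCoproduct {C : Category} (X Y S : Ob C)
  (inl : Hom X S) (inr : Hom Y S) : Prop :=
  forall (T : Ob C) (f : Hom X T) (g : Hom Y T),
    exists h : Hom S T, (comp h inl = f /\ comp h inr = g) /\
      (forall h' : Hom S T, comp h' inl = f -> comp h' inr = g -> h' = h).

Definition IsInitial {C : Category} (e : Ob C) : Prop :=
  forall T : Ob C, exists h : Hom e T, forall h' : Hom e T, h' = h.

Definition IsPullback {C : Category} {X Y Z P : Ob C}
  (p1 : Hom P X) (p2 : Hom P Y) (f : Hom X Z) (g : Hom Y Z) : Prop :=
  comp f p1 = comp g p2 /\
  forall (Q : Ob C) (q1 : Hom Q X) (q2 : Hom Q Y), comp f q1 = comp g q2 ->
    exists h : Hom Q P, (comp p1 h = q1 /\ comp p2 h = q2) /\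
      (forall h' : Hom Q P, comp p1 h' = q1 -> comp p2 h' = q2 -> h' = h).

Definition InvertsCoproducts {C1 C2 : Category} (F : Functor C1 C2) : Prop :=
  FullyFaithful F /\
  forall (X : Ob C1) (I : Type) (Z : I -> Ob C2) (inj : forall i, Hom (Z i) (F X)),
    IsCoproduct Z (F X) inj ->
    exists Xs : I -> Ob C1, forall i, exists phi : Hom (F (Xs i)) (Z i), IsIso phi.

Definition Extensive (C : Category) : Prop :=
  (exists e : Ob C, IsInitial e) /\
  (* disjointness of existing binary coproducts *)
  (forall (e : Ob C), IsInitial e ->
   forall (X Y S : Ob C) (inl : Hom X S) (inr : Hom Y S),
     IsBinCoproduct inl inr ->
     forall (a : Hom e X) (b : Hom e Y), IsPullback a b inl inr) /\
  (* stability of existing coproducts under pullback *)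
  (forall (I : Type) (U : I -> Ob C) (S : Ob C) (inj : forall i, Hom (U i) S),
     IsCoproduct U S inj ->
     forall (X : Ob C) (f : Hom X S),
       (forall i, exists (P : Ob C) (p1 : Hom P X) (p2 : Hom P (U i)),
           IsPullback p1 p2 f (inj i)) /\
       (forall (P : I -> Ob C) (p1 : forall i, Hom (P i) X)
               (p2 : forall i, Hom (P i) (U i)),
           (forall i, IsPullback (p1 i) (p2 i) f (inj i)) ->
           IsCoproduct P X p1)).

Record Presheaf (C : Category) := {
  PF :> Ob C -> Type;
  Pmap : forall a b : Ob C, Hom a b -> PF b -> PF a;
  Pmap_id : forall a (s : PF a), Pmap (idm a) s = s;
  Pmap_comp : forall a b c (g : Hom b c) (f : Hom a b) (s : PF c),
      Pmap (comp g f) s = Pmap f (Pmap g s)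
}.
Arguments Pmap {C} p {a b} _ _ : rename.

Definition ExtensivePresheaf {C : Category} (P : Presheaf C) : Prop :=
  forall (I : Type) (U : I -> Ob C) (S : Ob C) (inj : forall i, Hom (U i) S),
    IsCoproduct U S inj ->
    bijective (fun (s : P S) (i : I) => Pmap P (inj i) s).

Definition KanOb {C1 C2 : Category} (F : Functor C1 C2) (P : Presheaf C1)
  (Y : Ob C2) : Type :=
  { s : forall (X : Ob C1) (psi : Hom (F X) Y), P X |
    forall (X1 X2 : Ob C1) (psi1 : Hom (F X1) Y) (psi2 : Hom (F X2) Y)
           (f : Hom X1 X2),
      comp psi2 (Fmap F f) = psi1 -> Pmap P f (s X2 psi2) = s X1 psi1 }.

Definition KanMap {C1 C2 : Category} (F : Functor C1 C2) (P : Presheaf C1)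
  (Y1 Y2 : Ob C2) (g : Hom Y1 Y2) (s : KanOb F P Y2) : KanOb F P Y1.
Proof.
  destruct s as [s hs].
  exists (fun X phi => s X (comp g phi)).
  intros X1 X2 psi1 psi2 f H. apply hs.
  rewrite <- comp_assoc, H. reflexivity.
Defined.

Arguments KanMap {C1 C2} F P {Y1 Y2} g s.

Lemma KanOb_eq {C1 C2 : Category} (F : Functor C1 C2) (P : Presheaf C1)
  (Y : Ob C2) (s t : KanOb F P Y) : proj1_sig s = proj1_sig t -> s = t.
Proof.
  destruct s as [s hs], t as [t ht]; simpl; intros ->.
  f_equal; apply proof_irrelevance.
Qed.

Definition KanExt {C1 C2 : Category} (F : Functor C1 C2) (P : Presheaf C1) :
  Presheaf C2.
Proof.
  refine {| PF := KanOb F P; Pmap := fun a b g s => KanMap F P g s |}.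
  - intros a [s hs]; apply KanOb_eq; simpl.
    apply functional_extensionality_dep; intro X.
    apply functional_extensionality; intro phi.
    rewrite comp_id_l; reflexivity.
  - intros a b c g f [s hs]; apply KanOb_eq; simpl.
    apply functional_extensionality_dep; intro X.
    apply functional_extensionality; intro phi.
    rewrite comp_assoc; reflexivity.
Defined.

(* Main.v *)
Require Import Defs.
From Stdlib Require Import FunctionalExtensionality ProofIrrelevance ClassicalEpsilon Classical.

Lemma dchoice {I : Type} {B : I -> Type} (R : forall i, B i -> Prop) :
  (forall i, exists b, R i b) -> exists f : forall i, B i, forall i, R i (f i).
Proof.
  intro H. exists (fun i => proj1_sig (constructive_indefinite_description _ (H i))).
  intro i. exact (proj2_sig (constructive_indefinite_description _ (H i))).
Qed.

Lemma choose_pb {C : Category} {I : Type} (U : I -> Ob C) (S X : Ob C)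
  (inj : forall i, Hom (U i) S) (f : Hom X S) :
  (forall i, exists (P : Ob C) (p1 : Hom P X) (p2 : Hom P (U i)), IsPullback p1 p2 f (inj i)) ->
  exists (P : I -> Ob C) (p1 : forall i, Hom (P i) X) (p2 : forall i, Hom (P i) (U i)),
    forall i, IsPullback (p1 i) (p2 i) f (inj i).
Proof.
  intro H.
  destruct (dchoice (B := fun i => {P : Ob C & {p1 : Hom P X & Hom P (U i)}})
     (fun i b => IsPullback (projT1 (projT2 b)) (projT2 (projT2 b)) f (inj i))) as [g Hg].
  { intro i. destruct (H i) as (P & p1 & p2 & Hp). exists (existT _ P (existT _ p1 p2)). exact Hp. }
  exists (fun i => projT1 (g i)), (fun i => projT1 (projT2 (g i))), (fun i => projT2 (projT2 (g i))).
  exact Hg.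
Qed.

Definition upd {I : Type} {A : I -> Type} (f : forall m, A m) (j : I) (x : A j) : forall m, A m :=
  fun m => match excluded_middle_informative (j = m) with
           | left e => eq_rect j A x m e
           | right _ => f m end.

Lemma upd_eq {I} {A : I -> Type} f j x : @upd I A f j x j = x.
Proof.
  unfold upd. destruct (excluded_middle_informative (j = j)) as [e|n].
  - rewrite (proof_irrelevance _ e eq_refl). reflexivity.
  - exfalso; apply n; reflexivity.
Qed.

Lemma ext_monic (C : Category) : Extensive C ->
  forall (I : Type) (U : I -> Ob C) (S : Ob C) (inj : forall i, Hom (U i) S),
  IsCoproduct U S inj -> forall j (A : Ob C) (al be : Hom A (U j)),
  comp (inj j) al = comp (inj j) be -> al = be.
Proof.
  intros [_ [_ Hstab]] I U S inj Hc j A al be Heq.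
  destruct (Hstab I U S inj Hc (U j) (inj j)) as [Hex Hcop].
  destruct (choose_pb U S (U j) inj (inj j) Hex) as (Q & q & r & Hpb).
  specialize (Hcop Q q r Hpb).
  destruct (Hcop (U j) (upd (A := fun m => Hom (Q m) (U j)) q j (r j))) as [h [Hh _]].
  pose proof (Hh j) as Hhj. rewrite upd_eq in Hhj.
  destruct (Hpb j) as [Hsq Hup].
  destruct (Hup (U j) (idm _) (idm _) eq_refl) as [d [[Hd1 Hd2] _]].
  assert (hid : h = idm _).
  { transitivity (comp h (comp (q j) d)). { rewrite Hd1, comp_id_r; reflexivity. }
    rewrite comp_assoc, Hhj; exact Hd2. }
  destruct (Hup A al be Heq) as [d' [[Hd'1 Hd'2] _]].
  rewrite <- Hd'1, <- Hd'2, <- Hhj, hid, comp_id_l. reflexivity.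
Qed.

Lemma ext_disj (C : Category) : Extensive C ->
  forall (I : Type) (U : I -> Ob C) (S : Ob C) (inj : forall i, Hom (U i) S),
  IsCoproduct U S inj -> forall k j (A : Ob C) (al : Hom A (U k)) (be : Hom A (U j)),
  k <> j -> comp (inj k) al = comp (inj j) be -> IsInitial A.
Proof.
  intros [[e He] [Hdisj Hstab]] I U S inj Hc k j A al be Hne Heq.
  destruct (Hstab I U S inj Hc A (comp (inj k) al)) as [Hex Hcop].
  destruct (choose_pb U S A inj _ Hex) as (P & p1 & p2 & Hpb).
  specialize (Hcop P p1 p2 Hpb).
  destruct (proj2 (Hpb k) A (idm A) al) as [sk [[Hsk _] _]].
  { rewrite comp_id_r; reflexivity. }
  destruct (proj2 (Hpb j) A (idm A) be) as [sj [[Hsj _] _]].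
  { rewrite comp_id_r; exact Heq. }
  assert (Hsub : forall T (g1 g2 : Hom A T), g1 = g2).
  { intros T g1 g2.
    destruct (Hcop T (fun m => if excluded_middle_informative (m = j)
                               then comp g2 (p1 m) else comp g1 (p1 m))) as [h [Hh _]].
    assert (E1 : h = g1).
    { pose proof (Hh k) as H1; cbv beta in H1.
      destruct (excluded_middle_informative (k = j)) as [E|_]; [contradiction|].
      transitivity (comp h (comp (p1 k) sk)). { rewrite Hsk, comp_id_r; reflexivity. }
      rewrite comp_assoc, H1, <- comp_assoc, Hsk, comp_id_r; reflexivity. }
    assert (E2 : h = g2).
    { pose proof (Hh j) as H1; cbv beta in H1.
      destruct (excluded_middle_informative (j = j)) as [_|E]; [|contradiction E; reflexivity].
      transitivity (comp h (comp (p1 j) sj)). { rewrite Hsj, comp_id_r; reflexivity. }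
      rewrite comp_assoc, H1, <- comp_assoc, Hsj, comp_id_r; reflexivity. }
    congruence. }
  assert (Hbin : IsBinCoproduct (idm A) (idm A)).
  { intros T f g. exists f. split. split; rewrite comp_id_r; [reflexivity| apply Hsub].
    intros h' H1 _. rewrite comp_id_r in H1; exact H1. }
  destruct (He A) as [a _].
  destruct (proj2 (Hdisj e He A A A (idm A) (idm A) Hbin a a) A (idm A) (idm A) eq_refl) as [h0 _].
  intros T. destruct (He T) as [t _]. exists (comp t h0). intro h'; apply Hsub.
Qed.

Lemma coprod_iso {C : Category} {I : Type} (U V : I -> Ob C) (S : Ob C) (inj : forall i, Hom (U i) S)
  (e : forall i, Hom (V i) (U i)) : IsCoproduct U S inj -> (forall i, IsIso (e i)) ->
  IsCoproduct V S (fun i => comp (inj i) (e i)).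
Proof.
  intros Hc He T f.
  destruct (dchoice (B := fun i => Hom (U i) (V i))
     (fun i g => comp g (e i) = idm _ /\ comp (e i) g = idm _) He) as [g Hg].
  destruct (Hc T (fun i => comp (f i) (g i))) as [h [Hh Hu]].
  exists h. split.
  - intro i. cbv beta. rewrite comp_assoc, Hh, <- comp_assoc, (proj1 (Hg i)), comp_id_r. reflexivity.
  - intros h' Hh'. apply Hu. intro i. cbv beta. rewrite <- Hh', <- !comp_assoc, (proj2 (Hg i)), comp_id_r.
    reflexivity.
Qed.

Lemma reflect_coprod {C1 C2 : Category} (F : Functor C1 C2) : FullyFaithful F ->
  forall (I : Type) (Xs : I -> Ob C1) (X : Ob C1) (a : forall i, Hom (Xs i) X),
  IsCoproduct (fun i => F (Xs i)) (F X) (fun i => Fmap F (a i)) -> IsCoproduct Xs X a.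
Proof.
  intros FF I Xs X a Hc T f.
  destruct (Hc (F T) (fun i => Fmap F (f i))) as [h [Hh Hu]].
  destruct (proj2 (FF X T) h) as [h0 Hh0]. cbv beta in Hh0.
  exists h0. split.
  - intro i. apply (proj1 (FF _ _)). cbv beta. rewrite Fmap_comp, Hh0. apply Hh.
  - intros h' Hh'. apply (proj1 (FF _ _)). cbv beta. rewrite Hh0. apply Hu. intro i. cbv beta.
    rewrite <- Fmap_comp, Hh'. reflexivity.
Qed.

Lemma reflect_init {C1 C2 : Category} (F : Functor C1 C2) : FullyFaithful F ->
  forall W, IsInitial (F W) -> IsInitial W.
Proof.
  intros FF W Hi T. destruct (Hi (F T)) as [h Hh].
  destruct (proj2 (FF W T) h) as [h0 Hh0]. exists h0. intro h'.
  apply (proj1 (FF _ _)). cbv beta. cbv beta in Hh0. rewrite Hh0. apply Hh.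
Qed.

Lemma P_init {C : Category} (P : Presheaf C) : ExtensivePresheaf P ->
  forall W, IsInitial W -> forall x y : P W, x = y.
Proof.
  intros HP W Hi x y.
  assert (Hc : IsCoproduct (I := Empty_set) (fun i => Empty_set_rect (fun _ => Ob C) i) W
     (fun i : Empty_set => match i return Hom (Empty_set_rect (fun _ => Ob C) i) W with end)).
  { intros T f. destruct (Hi T) as [h Hh]. exists h. split; [intros []|]. intros h' _; apply Hh. }
  apply (proj1 (HP _ _ _ _ Hc)). apply functional_extensionality_dep. intros [].
Qed.

Lemma decomp (C1 C2 : Category) (F : Functor C1 C2) :
  InvertsCoproducts F -> Extensive C2 ->
  forall (I : Type) (U : I -> Ob C2) (S : Ob C2) (inj : forall i, Hom (U i) S),
  IsCoproduct U S inj -> forall (X : Ob C1) (psi : Hom (F X) S),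
  exists (Xs : I -> Ob C1) (a : forall i, Hom (Xs i) X) (ph : forall i, Hom (F (Xs i)) (U i)),
    IsCoproduct Xs X a /\
    (forall i, comp psi (Fmap F (a i)) = comp (inj i) (ph i)) /\
    (forall (Z : Ob C1) (g : Hom Z X) i (ph' : Hom (F Z) (U i)),
       comp psi (Fmap F g) = comp (inj i) ph' ->
       exists c : Hom Z (Xs i), comp (a i) c = g /\ comp (ph i) (Fmap F c) = ph').
Proof.
  intros [FF Finv] [_ [_ Hstab]] I U S inj Hc X psi.
  destruct (Hstab I U S inj Hc (F X) psi) as [Hex Hcop].
  destruct (choose_pb U S (F X) inj psi Hex) as (Pb & p1 & p2 & Hpb).
  specialize (Hcop Pb p1 p2 Hpb).
  destruct (Finv X I Pb p1 Hcop) as [Xs HXs].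
  destruct (dchoice (B := fun i => Hom (F (Xs i)) (Pb i)) (fun i phi => IsIso phi) HXs) as [phi Hphi].
  destruct (dchoice (B := fun i => Hom (Xs i) X) (fun i a => Fmap F a = comp (p1 i) (phi i))) as [a Ha].
  { intro i. exact (proj2 (FF (Xs i) X) (comp (p1 i) (phi i))). }
  exists Xs, a, (fun i => comp (p2 i) (phi i)).
  split; [|split].
  - apply (reflect_coprod F FF).
    replace (fun i => Fmap F (a i)) with (fun i => comp (p1 i) (phi i)).
    + apply coprod_iso; assumption.
    + apply functional_extensionality_dep; intro i; symmetry; apply Ha.
  - intro i. rewrite Ha, comp_assoc, (proj1 (Hpb i)), <- comp_assoc. reflexivity.
  - intros Z g i ph' Hg.
    destruct (proj2 (Hpb i) (F Z) (Fmap F g) ph' Hg) as [m [[Hm1 Hm2] _]].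
    destruct (Hphi i) as [inv [Hi1 Hi2]].
    destruct (proj2 (FF Z (Xs i)) (comp inv m)) as [c Hc'].
    cbv beta in Hc'.
    exists c. split.
    + apply (proj1 (FF Z X)). cbv beta.
      rewrite Fmap_comp, Hc', Ha, <- Hm1, !comp_assoc, <- (comp_assoc (p1 i) (phi i) inv),
        Hi2, comp_id_r. reflexivity.
    + rewrite Hc', !comp_assoc, <- (comp_assoc (p2 i) (phi i) inv), Hi2, comp_id_r.
      exact Hm2.
Qed.

Theorem mainTheorem3 (C1 C2 : Category) (F : Functor C1 C2) (P : Presheaf C1) :
  InvertsCoproducts F -> Extensive C2 -> ExtensivePresheaf P ->
  ExtensivePresheaf (KanExt F P).
Proof.
  intros HF HC2 HP. pose proof HF as [FF Finv].
  intros I U S inj Hc.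
  assert (KL : forall (t : forall i, KanOb F P (U i)) W k j (al : Hom (F W) (U k)) (be : Hom (F W) (U j)),
     comp (inj k) al = comp (inj j) be -> proj1_sig (t k) W al = proj1_sig (t j) W be).
  { intros t W k j al be Heq. destruct (classic (k = j)) as [E|E].
    - subst j. rewrite (ext_monic C2 HC2 I U S inj Hc k (F W) al be Heq). reflexivity.
    - apply (P_init P HP W). apply (reflect_init F FF).
      exact (ext_disj C2 HC2 I U S inj Hc k j (F W) al be E Heq). }
  split.
  - intros s1 s2 H. destruct s1 as [s1 hs1], s2 as [s2 hs2].
    apply KanOb_eq. simpl.
    apply functional_extensionality_dep; intro X. apply functional_extensionality; intro psi.
    destruct (decomp C1 C2 F HF HC2 I U S inj Hc X psi) as (Xs & a & ph & Hco & Hsq & _).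
    apply (proj1 (HP I Xs X a Hco)). apply functional_extensionality_dep; intro i. cbv beta.
    rewrite (hs1 _ _ _ psi (a i) eq_refl), (hs2 _ _ _ psi (a i) eq_refl), Hsq.
    pose proof (f_equal (fun u : forall i, KanOb F P (U i) => proj1_sig (u i) (Xs i) (ph i)) H) as H'. simpl in H'. exact H'.
  - intro t.
    assert (Huniq : forall X (psi : Hom (F X) S) (x y : P X),
      (forall Z (g : Hom Z X) i (ph' : Hom (F Z) (U i)),
        comp psi (Fmap F g) = comp (inj i) ph' -> Pmap P g x = proj1_sig (t i) Z ph') ->
      (forall Z (g : Hom Z X) i (ph' : Hom (F Z) (U i)),
        comp psi (Fmap F g) = comp (inj i) ph' -> Pmap P g y = proj1_sig (t i) Z ph') ->
      x = y).
    { intros X psi x y Hx Hy.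
      destruct (decomp C1 C2 F HF HC2 I U S inj Hc X psi) as (Xs & a & ph & Hco & Hsq & _).
      apply (proj1 (HP I Xs X a Hco)). apply functional_extensionality_dep; intro i. cbv beta.
      rewrite (Hx _ (a i) i (ph i) (Hsq i)), (Hy _ (a i) i (ph i) (Hsq i)). reflexivity. }
    assert (Hex : forall X (psi : Hom (F X) S), exists x : P X,
      (forall Z (g : Hom Z X) i (ph' : Hom (F Z) (U i)),
        comp psi (Fmap F g) = comp (inj i) ph' -> Pmap P g x = proj1_sig (t i) Z ph')).
    { intros X psi.
      destruct (decomp C1 C2 F HF HC2 I U S inj Hc X psi) as (Xs & a & ph & Hco & Hsq & Hfac).
      destruct (proj2 (HP I Xs X a Hco) (fun i => proj1_sig (t i) (Xs i) (ph i))) as [x Hx].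
      assert (Hxi : forall i, Pmap P (a i) x = proj1_sig (t i) (Xs i) (ph i)).
      { intro i. exact (f_equal (fun u => u i) Hx). }
      exists x. intros Z g j ph' Hg.
      destruct (decomp C1 C2 F HF HC2 I U S inj Hc Z (comp psi (Fmap F g)))
        as (Zs & b & ch & Hcoz & Hsqz & _).
      apply (proj1 (HP I Zs Z b Hcoz)). apply functional_extensionality_dep; intro k. cbv beta.
      rewrite <- Pmap_comp.
      destruct (Hfac (Zs k) (comp g (b k)) k (ch k)) as [c [Hc1 Hc2]].
      { rewrite Fmap_comp, comp_assoc. apply Hsqz. }
      rewrite <- Hc1, Pmap_comp, Hxi.
      rewrite (proj2_sig (t k) _ _ _ (ph k) c eq_refl), Hc2.
      rewrite (proj2_sig (t j) _ _ _ ph' (b k) eq_refl).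
      apply KL.
      rewrite <- Hsqz, comp_assoc, <- Hg, <- comp_assoc. reflexivity. }
    pose (sv := fun X psi => proj1_sig (constructive_indefinite_description _ (Hex X psi))).
    assert (Hsv : forall X (psi : Hom (F X) S),
      (forall Z (g : Hom Z X) i (ph' : Hom (F Z) (U i)),
        comp psi (Fmap F g) = comp (inj i) ph' -> Pmap P g (sv X psi) = proj1_sig (t i) Z ph')).
    { intros X psi. exact (proj2_sig (constructive_indefinite_description _ (Hex X psi))). }
    assert (Hcompat : forall X1 X2 psi1 psi2 (f : Hom X1 X2), comp psi2 (Fmap F f) = psi1 ->
              Pmap P f (sv X2 psi2) = sv X1 psi1).
    { intros X1 X2 psi1 psi2 f Hf. apply (Huniq X1 psi1); [|apply Hsv].
      intros Z g i ph' Hg. rewrite <- Pmap_comp. apply Hsv.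
      rewrite Fmap_comp, comp_assoc, Hf. exact Hg. }
    exists (exist _ sv Hcompat).
    apply functional_extensionality_dep; intro i. apply KanOb_eq. simpl.
    apply functional_extensionality_dep; intro X. apply functional_extensionality; intro ph.
    specialize (Hsv X (comp (inj i) ph) X (idm X) i ph).
    rewrite Pmap_id in Hsv. apply Hsv. rewrite Fmap_id, comp_id_r. reflexivity.
Qed.
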